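(* Let $b>0$ and let $\psi(x;a,\sigma)$ be as in the context, with $\psi^{(k)}$ its $k$-th derivative in $x$. For every $k\in\mathbb{N}\cup\{0\}$ and $x\in\mathbb{R}$, $$\frac{\partial}{\partial \sigma}\Big(\frac{\psi^{(k)}(x;a,\sigma)}{\psi^{(k+1)}(x;a,\sigma)}\Big)=\frac{(a-bx)\big[\psi^{(k+1)}(x;a,\sigma)^2-\psi^{(k)}(x;a,\sigma)\psi^{(k+2)}(x;a,\sigma)\big]+b\,\psi^{(k+1)}(x;a,\sigma)\psi^{(k)}(x;a,\sigma)}{b\sigma\,\psi^{(k+1)}(x;a,\sigma)^2}>0.$$
   Context: Constants $b>0$, $\rho>0$; parameters $a\in\mathbb{R}$, $\sigma>0$. For $\beta<0$, $D_\beta(x)=\frac{e^{-x^2/4}}{\Gamma(-\beta)}\int_0^\infty t^{-\beta-1}e^{-t^2/2-xt}dt$, and $\psi(x;a,\sigma)=e^{\frac{(bx-a)^2}{2\sigma^2 b}}D_{-\rho/b}\big(-\frac{bx-a}{\sigma b}\sqrt{2b}\big)$, the positive strictly increasing fundamental solution of $\frac12\sigma^2u''+(a-bx)u'-\rho u=0$. *)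

(* Defs.v *)
From Stdlib Require Import Reals.
From Coquelicot Require Import Coquelicot.
Open Scope R_scope.

Definition Gamma_fn (s : R) : R :=
  RInt_gen (fun t => Rpower t (s - 1) * exp (- t)) (at_right 0) (Rbar_locally p_infty).

(* Parabolic cylinder function, integral representation valid for beta < 0:
   D_beta(x) = e^{-x^2/4} / Gamma(-beta) * int_0^oo t^{-beta-1} e^{-t^2/2 - x t} dt. *)
Definition Dpc (beta x : R) : R :=
  exp (- x ^ 2 / 4) / Gamma_fn (- beta) *
  RInt_gen (fun t => Rpower t (- beta - 1) * exp (- t ^ 2 / 2 - x * t))
           (at_right 0) (Rbar_locally p_infty).

Definition psi (b rho : R) (x a sigma : R) : R :=
  exp ((b * x - a) ^ 2 / (2 * sigma ^ 2 * b)) *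
  Dpc (- rho / b) (- (b * x - a) / (sigma * b) * sqrt (2 * b)).

Definition psi_k (b rho : R) (k : nat) (x a sigma : R) : R :=
  Derive_n (fun y => psi b rho y a sigma) k x.

(* Main.v *)
Require Import Defs.
From Stdlib Require Import Reals.
From Coquelicot Require Import Coquelicot.
Open Scope R_scope.
From Stdlib Require Import Lra Psatz Classical.

Lemma exp_le' x y : x <= y -> exp x <= exp y.
Proof. intros [H|H]; [left; apply exp_increasing; auto | subst; lra]. Qed.

Lemma ln_le_lin t : 0 < t -> ln t <= t - 1.
Proof. intros Ht. pose proof (exp_ineq1_le (ln t)). rewrite exp_ln in H; lra. Qed.

Definition W (c w t : R) := Rpower t c * exp (- t ^ 2 / 2 - w * t).

Lemma W_pos c w t : 0 < t -> 0 < W c w t.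
Proof. intros; unfold W, Rpower. apply Rmult_lt_0_compat; apply exp_pos. Qed.

Lemma W_derive c w t : 0 < t ->
  is_derive (W c w) t (c * Rpower t (c - 1) * exp (- t ^ 2 / 2 - w * t)
                       + Rpower t c * ((- t - w) * exp (- t ^ 2 / 2 - w * t))).
Proof.
  intros Ht. unfold W.
  apply (is_derive_mult (fun t => Rpower t c) (fun t => exp (- t ^ 2 / 2 - w * t))).
  - apply is_derive_Reals, derivable_pt_lim_power; auto.
  - auto_derive; auto. simpl. unfold Rdiv, Rminus. field.
  - intros; apply Rmult_comm.
Qed.

Lemma W_cont c w t : 0 < t -> continuous (W c w) t.
Proof. intros Ht; apply (@ex_derive_continuous R_AbsRing R_NormedModule); eexists; apply W_derive; auto. Qed.

Lemma Rpower_le_exp c t : 1 <= t -> Rpower t c <= exp (Rabs c * t).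
Proof.
  intros Ht. unfold Rpower. apply exp_le'.
  assert (0 <= ln t) by (rewrite <- ln_1; apply ln_le; lra).
  pose proof (ln_le_lin t ltac:(lra)).
  assert (c * ln t <= Rabs c * ln t) by (apply Rmult_le_compat_r; [auto| apply Rle_abs]).
  assert (Rabs c * ln t <= Rabs c * t) by (apply Rmult_le_compat_l; [apply Rabs_pos| lra]).
  lra.
Qed.

Lemma W_bound_small c w t : 0 < t <= 1 -> W c w t <= exp (Rabs w) * Rpower t c.
Proof.
  intros Ht. unfold W. rewrite Rmult_comm. apply Rmult_le_compat_r.
  - unfold Rpower; left; apply exp_pos.
  - apply exp_le'.
    assert (- w * t <= Rabs w) .
    { assert (- w * t <= Rabs w * t).
      { apply Rmult_le_compat_r; [lra|]. rewrite <- Rabs_Ropp. apply Rle_abs. }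
      assert (Rabs w * t <= Rabs w) by (pose proof (Rabs_pos w); nra). lra. }
    assert (0 <= t ^ 2 / 2) by (simpl; nra). lra.
Qed.

Lemma W_bound_large c w t : 1 <= t ->
  W c w t <= exp ((Rabs c + Rabs w + /2) ^ 2 / 2) * exp (- t / 2).
Proof.
  intros Ht. unfold W.
  eapply Rle_trans.
  { apply Rmult_le_compat_r; [left; apply exp_pos|]. apply (Rpower_le_exp c t Ht). }
  rewrite <- !exp_plus. apply exp_le'.
  set (A := Rabs c + Rabs w + /2).
  assert (- w * t <= Rabs w * t).
  { apply Rmult_le_compat_r; [lra|]. rewrite <- Rabs_Ropp. apply Rle_abs. }
  assert (0 <= (t - A)^2) by (apply pow2_ge_0).
  unfold A in *. simpl in *. nra.
Qed.

Lemma gam_bound_large c t : 1 <= t ->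
  Rpower t c * exp (- t) <= exp (Rabs c * ln (2 * Rabs c + 1)) * exp (- t / 2).
Proof.
  intros Ht. unfold Rpower. rewrite <- !exp_plus. apply exp_le'.
  set (m := 2 * Rabs c + 1).
  assert (Hm : 1 <= m) by (unfold m; pose proof (Rabs_pos c); lra).
  assert (0 <= ln t) by (rewrite <- ln_1; apply ln_le; lra).
  assert (H1 : ln (t / m) <= t / m - 1) by (apply ln_le_lin; apply Rdiv_lt_0_compat; lra).
  rewrite ln_div in H1 by lra.
  assert (0 <= ln m) by (rewrite <- ln_1; apply ln_le; lra).
  assert (c * ln t <= Rabs c * ln t) by (apply Rmult_le_compat_r; [auto| apply Rle_abs]).
  assert (Rabs c * ln t <= Rabs c * (t/m + ln m)) by (apply Rmult_le_compat_l; [apply Rabs_pos| lra]).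
  assert (Rabs c * (t / m) <= t / 2).
  { unfold m. pose proof (Rabs_pos c).
    apply (Rmult_le_reg_r (2 * Rabs c + 1)); [lra|].
    field_simplify; [|lra]. nra. }
  nra.
Qed.

Lemma Rpower_1_l x : Rpower 1 x = 1.
Proof. unfold Rpower. rewrite ln_1, Rmult_0_r. apply exp_0. Qed.

Lemma Rpower_pos t c : 0 < Rpower t c.
Proof. unfold Rpower; apply exp_pos. Qed.

Lemma RInt_pow_bound K c a : -1 < c -> 0 < a <= 1 ->
  RInt (fun t => K * Rpower t c) a 1 = K / (c+1) - K / (c+1) * Rpower a (c+1).
Proof.
  intros Hc Ha.
  set (F := fun t => (K / (c+1)) * Rpower t (c+1)).
  assert (HF : is_RInt (fun t => K * Rpower t c) a 1 (minus (F 1) (F a))).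
  { apply (is_RInt_derive F).
    - intros x Hx. assert (0 < x).
      { eapply Rlt_le_trans; [|apply Hx]. apply Rmin_case; lra. }
      unfold F.
      replace (K * Rpower x c) with (K / (c+1) * ((c+1) * Rpower x (c + 1 - 1))).
      2:{ replace (c + 1 - 1) with c by ring. field. lra. }
      apply is_derive_scal. apply is_derive_Reals, derivable_pt_lim_power; auto.
    - intros x Hx. assert (0 < x).
      { eapply Rlt_le_trans; [|apply Hx]. apply Rmin_case; lra. }
      apply (@ex_derive_continuous R_AbsRing R_NormedModule).
      eexists. apply is_derive_scal. apply is_derive_Reals, derivable_pt_lim_power; auto. }
  rewrite (is_RInt_unique _ _ _ _ HF). unfold F, minus, plus, opp; simpl.
  rewrite Rpower_1_l. ring.
Qed.

Lemma RInt_exp_bound K b : 1 <= b ->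
  RInt (fun t => K * exp (- t / 2)) 1 b = 2 * K * exp (- (1) / 2) - 2 * K * exp (- b / 2).
Proof.
  intros Hb.
  set (F := fun t => - 2 * K * exp (- t / 2)).
  assert (HF : is_RInt (fun t => K * exp (- t / 2)) 1 b (minus (F b) (F 1))).
  { apply (is_RInt_derive F).
    - intros x Hx. unfold F. auto_derive; auto. unfold Rdiv. field.
    - intros x Hx. apply (@ex_derive_continuous R_AbsRing R_NormedModule).
      auto_derive; auto. }
  rewrite (is_RInt_unique _ _ _ _ HF). unfold F, minus, plus, opp; simpl. ring.
Qed.

Section Gen.
Variable f : R -> R.
Hypothesis fc : forall t, 0 < t -> continuous f t.
Hypothesis fpos : forall t, 0 < t -> 0 <= f t.

Lemma exR a b : 0 < a -> 0 < b -> ex_RInt f a b.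
Proof.
  intros Ha Hb. apply (@ex_RInt_continuous R_CompleteNormedModule). intros z [Hz _]. apply fc.
  eapply Rlt_le_trans; [|apply Hz]. apply Rmin_case; auto.
Qed.

Lemma RInt_mono a' a b b' : 0 < a' -> a' <= a -> a <= b -> b <= b' ->
  RInt f a b <= RInt f a' b'.
Proof.
  intros H1 H2 H3 H4.
  rewrite <- (RInt_Chasles f a' a b') by (apply exR; lra).
  rewrite <- (RInt_Chasles f a b b') by (apply exR; lra).
  assert (0 <= RInt f a' a) by (apply RInt_ge_0; [lra| apply exR; lra| intros; apply fpos; lra]).
  assert (0 <= RInt f b b') by (apply RInt_ge_0; [lra| apply exR; lra| intros; apply fpos; lra]).
  simpl. unfold plus; simpl. lra.
Qed.

Lemma RInt_bound (K c : R) : -1 < c -> 0 <= K ->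
  (forall t, 0 < t <= 1 -> f t <= K * Rpower t c) ->
  (forall t, 1 <= t -> f t <= K * exp (- t / 2)) ->
  forall a b, 0 < a -> a <= b -> RInt f a b <= K / (c+1) + 2 * K.
Proof.
  intros Hc HK H1 H2 a b Ha Hab.
  set (a' := Rmin a 1). set (b' := Rmax b 1).
  assert (Ha' : 0 < a' <= 1) by (unfold a'; split; [apply Rmin_case; lra | apply Rmin_r]).
  assert (Hb' : 1 <= b') by (unfold b'; apply Rmax_r).
  eapply Rle_trans.
  { apply (RInt_mono a' a b b'); try lra. apply Rmin_l. apply Rmax_l. }
  rewrite <- (RInt_Chasles f a' 1 b') by (apply exR; lra).
  simpl. unfold plus; simpl.
  apply Rplus_le_compat.
  - eapply Rle_trans.
    { apply (RInt_le f (fun t => K * Rpower t c)); try lra.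
      apply exR; lra.
      apply (@ex_RInt_continuous R_CompleteNormedModule). intros z Hz.
      assert (0 < z) by (eapply Rlt_le_trans; [|apply Hz]; apply Rmin_case; lra).
      apply (@ex_derive_continuous R_AbsRing R_NormedModule).
      eexists. apply is_derive_scal. apply is_derive_Reals, derivable_pt_lim_power; auto.
      intros x Hx. apply H1; lra. }
    rewrite RInt_pow_bound by lra.
    assert (0 <= K / (c+1) * Rpower a' (c+1)).
    { apply Rmult_le_pos; [apply Rdiv_le_0_compat; lra | left; apply Rpower_pos]. }
    lra.
  - eapply Rle_trans.
    { apply (RInt_le f (fun t => K * exp (- t / 2))); try lra.
      apply exR; lra.
      apply (@ex_RInt_continuous R_CompleteNormedModule). intros z Hz.
      apply (@ex_derive_continuous R_AbsRing R_NormedModule). auto_derive; auto.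
      intros x Hx. apply H2; lra. }
    rewrite RInt_exp_bound by lra.
    assert (exp (- (1)/2) <= 1) by (pose proof (exp_le' (- (1)/2) 0 ltac:(lra)) as E; rewrite exp_0 in E; exact E).
    assert (0 <= K * exp (- b' / 2)) by (apply Rmult_le_pos; [lra| left; apply exp_pos]).
    nra.
Qed.
End Gen.

Lemma ballR x (e : R) y : ball x e y <-> Rabs (y - x) < e.
Proof. unfold ball; simpl; unfold AbsRing_ball, abs, minus, plus, opp; simpl. tauto. Qed.

Lemma gen_exists (f : R -> R) B :
  (forall t, 0 < t -> continuous f t) ->
  (forall t, 0 < t -> 0 <= f t) ->
  (forall a b, 0 < a -> a <= b -> RInt f a b <= B) ->
  exists l, is_RInt_gen f (at_right 0) (Rbar_locally p_infty) l /\ RInt f 1 2 <= l.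
Proof.
  intros fc fpos HB.
  set (E := fun y => exists a b, 0 < a /\ a <= b /\ y = RInt f a b).
  assert (Hb : bound E).
  { exists B. intros y [a [b [Ha [Hab ->]]]]. apply HB; auto. }
  assert (Hne : exists y, E y) by (exists (RInt f 1 2), 1, 2; repeat split; lra).
  destruct (completeness E Hb Hne) as [l [Hub Hlub]].
  assert (E12 : RInt f 1 2 <= l) by (apply Hub; exists 1, 2; repeat split; lra).
  exists l. split; auto.
  unfold is_RInt_gen, filterlimi, filter_le, filtermapi. intros P [eps HP].
  assert (Hex : exists a0 b0, 0 < a0 /\ a0 <= b0 /\ l - eps < RInt f a0 b0).
  { destruct (classic (exists a0 b0, 0 < a0 /\ a0 <= b0 /\ l - eps < RInt f a0 b0)) as [H|H]; auto.
    exfalso.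
    assert (l <= l - eps).
    { apply Hlub. intros y [a [b [Ha [Hab ->]]]].
      destruct (Rle_or_lt (RInt f a b) (l - eps)) as [H1|H1]; auto.
      exfalso; apply H; exists a, b; auto. }
    destruct eps as [e He]; simpl in *; lra. }
  destruct Hex as [a0 [b0 [Ha0 [Hab0 Hl]]]].
  apply Filter_prod with (fun a => 0 < a < a0) (fun b => b0 < b).
  - exists (mkposreal a0 Ha0). intros y Hy Hy0. split; auto.
    apply ballR in Hy. change (Rabs (y - 0) < a0) in Hy. rewrite Rminus_0_r in Hy.
    apply Rabs_def2 in Hy. lra.
  - exists b0. auto.
  - intros a b [Ha Ha'] Hb'. simpl. exists (RInt f a b). split.
    + apply (@RInt_correct R_CompleteNormedModule). apply exR; auto; lra.
    + apply HP. apply ballR.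
      assert (RInt f a b <= l) by (apply Hub; exists a, b; repeat split; lra).
      assert (RInt f a0 b0 <= RInt f a b) by (apply RInt_mono; auto; lra).
      apply Rabs_def1; lra.
Qed.

Definition fK (q w : R) := fun t => Rpower t (q - 1) * exp (- t ^ 2 / 2 - w * t).
Definition K (q w : R) := RInt_gen (fK q w) (at_right 0) (Rbar_locally p_infty).

Lemma pos_int (f : R -> R) Kc c :
  -1 < c -> 0 <= Kc ->
  (forall t, 0 < t -> continuous f t) ->
  (forall t, 0 < t -> 0 < f t) ->
  (forall t, 0 < t <= 1 -> f t <= Kc * Rpower t c) ->
  (forall t, 1 <= t -> f t <= Kc * exp (- t / 2)) ->
  is_RInt_gen f (at_right 0) (Rbar_locally p_infty)
     (RInt_gen f (at_right 0) (Rbar_locally p_infty))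
  /\ 0 < RInt_gen f (at_right 0) (Rbar_locally p_infty).
Proof.
  intros Hc HK fc fpos H1 H2.
  assert (fpos' : forall t, 0 < t -> 0 <= f t) by (intros; left; auto).
  destruct (gen_exists f (Kc / (c+1) + 2 * Kc) fc fpos'
              (RInt_bound f fc fpos' Kc c Hc HK H1 H2)) as [l [Hl Hl2]].
  rewrite (is_RInt_gen_unique f l Hl). split; auto.
  eapply Rlt_le_trans; [|apply Hl2].
  apply RInt_gt_0; [lra| intros; apply fpos; lra | intros; apply fc; lra].
Qed.

Lemma K_is q w : 0 < q ->
  is_RInt_gen (fK q w) (at_right 0) (Rbar_locally p_infty) (K q w) /\ 0 < K q w.
Proof.
  intros Hq. unfold K.
  set (A := Rabs (q - 1) + Rabs w + /2).
  apply (pos_int _ (exp (Rabs w) + exp (A ^ 2 / 2)) (q - 1)).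
  - lra.
  - pose proof (exp_pos (Rabs w)); pose proof (exp_pos (A^2/2)); lra.
  - intros t Ht. apply (W_cont (q-1) w t Ht).
  - intros t Ht. apply (W_pos (q-1) w t Ht).
  - intros t Ht. eapply Rle_trans. apply (W_bound_small (q-1) w t Ht).
    apply Rmult_le_compat_r; [left; apply Rpower_pos|]. pose proof (exp_pos (A^2/2)); lra.
  - intros t Ht. eapply Rle_trans. apply (W_bound_large (q-1) w t Ht).
    apply Rmult_le_compat_r; [left; apply exp_pos|]. fold A. pose proof (exp_pos (Rabs w)); lra.
Qed.

Lemma Gamma_pos s : 0 < s -> 0 < RInt_gen (fun t => Rpower t (s - 1) * exp (- t)) (at_right 0) (Rbar_locally p_infty).
Proof.
  intros Hs.
  set (c := s - 1).
  apply (pos_int _ (1 + exp (Rabs c * ln (2 * Rabs c + 1))) c).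
  - unfold c; lra.
  - pose proof (exp_pos (Rabs c * ln (2 * Rabs c + 1))); lra.
  - intros t Ht. apply (@ex_derive_continuous R_AbsRing R_NormedModule).
    eexists. apply (is_derive_mult (fun t => Rpower t c) (fun t => exp (- t))).
    + apply is_derive_Reals, derivable_pt_lim_power; auto.
    + auto_derive; auto.
    + intros; apply Rmult_comm.
  - intros t Ht. apply Rmult_lt_0_compat; [apply Rpower_pos| apply exp_pos].
  - intros t Ht. rewrite Rmult_comm. apply Rmult_le_compat_r; [left; apply Rpower_pos|].
    pose proof (exp_pos (Rabs c * ln (2 * Rabs c + 1))).
    assert (exp (- t) <= 1) by (pose proof (exp_le' (- t) 0 ltac:(lra)) as E; rewrite exp_0 in E; exact E).
    lra.
  - intros t Ht. eapply Rle_trans. apply (gam_bound_large c t Ht).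
    apply Rmult_le_compat_r; [left; apply exp_pos|]. lra.
Qed.

Lemma expm1_bound x : Rabs (exp x - 1) <= Rabs x * exp (Rabs x).
Proof.
  destruct (Rle_or_lt 0 x) as [Hx|Hx].
  - rewrite (Rabs_right x) by lra.
    pose proof (exp_ineq1_le (- x)).
    assert (exp x * exp (- x) = 1) by (rewrite <- exp_plus; replace (x + - x) with 0 by ring; apply exp_0).
    assert (1 <= exp x) by (pose proof (exp_ineq1_le x); lra).
    rewrite Rabs_right by lra.
    pose proof (exp_pos x). nra.
  - rewrite (Rabs_left x) by lra.
    pose proof (exp_ineq1_le x).
    assert (exp x < 1) by (pose proof (exp_increasing x 0 Hx) as E; rewrite exp_0 in E; exact E).
    rewrite Rabs_left by lra.
    assert (1 <= exp (- x)) by (pose proof (exp_ineq1_le (-x)); lra).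
    nra.
Qed.

Lemma exp_taylor_bound u : Rabs (exp u - 1 - u) <= u ^ 2 * exp (Rabs u).
Proof.
  set (g := fun s => exp s - s).
  assert (Hd : forall c, derivable_pt_lim g c (exp c - 1)).
  { intros c. apply is_derive_Reals. unfold g. auto_derive; auto. ring. }
  destruct (Rtotal_order u 0) as [Hu|[Hu|Hu]].
  - destruct (MVT_cor2 g (fun c => exp c - 1) u 0 Hu (fun c _ => Hd c)) as [xi [E Hxi]].
    unfold g in E. rewrite exp_0 in E.
    replace (exp u - 1 - u) with ((exp xi - 1) * u) by nra.
    rewrite Rabs_mult. pose proof (expm1_bound xi).
    assert (Rabs xi <= Rabs u) by (rewrite !Rabs_left; lra).
    assert (exp (Rabs xi) <= exp (Rabs u)) by (apply exp_le'; lra).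
    assert (Rabs xi * exp (Rabs xi) <= Rabs u * exp (Rabs u)).
    { apply Rmult_le_compat; auto; try apply Rabs_pos; left; apply exp_pos. }
    replace (u ^ 2) with (Rabs u * Rabs u) by (rewrite <- Rabs_mult; simpl; rewrite Rmult_1_r; apply Rabs_right; nra).
    pose proof (Rabs_pos u). pose proof (Rabs_pos (exp xi - 1)). nra.
  - subst. rewrite exp_0. replace (1 - 1 - 0) with 0 by ring. rewrite Rabs_R0. simpl. lra.
  - destruct (MVT_cor2 g (fun c => exp c - 1) 0 u Hu (fun c _ => Hd c)) as [xi [E Hxi]].
    unfold g in E. rewrite exp_0 in E.
    replace (exp u - 1 - u) with ((exp xi - 1) * u) by nra.
    rewrite Rabs_mult. pose proof (expm1_bound xi).
    assert (Rabs xi <= Rabs u) by (rewrite !Rabs_right; lra).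
    assert (exp (Rabs xi) <= exp (Rabs u)) by (apply exp_le'; lra).
    assert (Rabs xi * exp (Rabs xi) <= Rabs u * exp (Rabs u)).
    { apply Rmult_le_compat; auto; try apply Rabs_pos; left; apply exp_pos. }
    replace (u ^ 2) with (Rabs u * Rabs u) by (rewrite <- Rabs_mult; simpl; rewrite Rmult_1_r; apply Rabs_right; nra).
    pose proof (Rabs_pos u). pose proof (Rabs_pos (exp xi - 1)). nra.
Qed.

Lemma Rpower_S x c : 0 < x -> Rpower x (c + 1) = x * Rpower x c.
Proof. intros. rewrite Rpower_plus, Rpower_1 by auto. ring. Qed.

Lemma fK_S q w x : 0 < x -> fK (q + 1) w x = x * fK q w x.
Proof.
  intros. unfold fK. replace (q + 1 - 1) with ((q - 1) + 1) by ring. rewrite Rpower_S by auto. ring.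
Qed.

Lemma fK_SS q w x : 0 < x -> fK (q + 2) w x = x ^ 2 * fK q w x.
Proof.
  intros. replace (q + 2) with ((q + 1) + 1) by ring. rewrite !fK_S by auto. simpl; ring.
Qed.

Lemma fK_shift q w h x : fK q (w + h) x = fK q w x * exp (- h * x).
Proof.
  unfold fK. rewrite Rmult_assoc, <- exp_plus. do 2 f_equal. ring.
Qed.

Lemma fK_diff_pt q w h x : 0 < x -> Rabs h <= 1 ->
  Rabs (fK q (w+h) x - fK q w x + h * fK (q+1) w x) <= h^2 * fK (q+2) (w-1) x.
Proof.
  intros Hx Hh.
  rewrite fK_S, fK_SS, fK_shift by auto.
  replace (w - 1) with (w + -1) by ring. rewrite fK_shift.
  assert (HP : 0 < fK q w x) by (apply W_pos; auto).
  replace (fK q w x * exp (- h * x) - fK q w x + h * (x * fK q w x))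
    with (fK q w x * (exp (- h * x) - 1 - (- h * x))) by ring.
  rewrite Rabs_mult, (Rabs_right (fK q w x)) by lra.
  pose proof (exp_taylor_bound (- h * x)).
  assert (exp (Rabs (- h * x)) <= exp (- -1 * x)).
  { apply exp_le'. rewrite Rabs_mult, (Rabs_right x) by lra. rewrite Rabs_Ropp. nra. }
  assert ((- h * x) ^ 2 * exp (Rabs (- h * x)) <= h ^ 2 * x ^ 2 * exp (- -1 * x)).
  { replace ((- h * x) ^ 2) with (h ^ 2 * x ^ 2) by ring.
    apply Rmult_le_compat_l; auto. simpl; nra. }
  replace (h ^ 2 * (x ^ 2 * (fK q w x * exp (- -1 * x)))) with (fK q w x * (h ^ 2 * x ^ 2 * exp (- -1 * x))) by ring.
  apply Rmult_le_compat_l; lra.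
Qed.

Lemma filt_pos : filter_prod (at_right 0) (Rbar_locally p_infty)
  (fun ab : R * R => 0 < fst ab /\ fst ab <= snd ab).
Proof.
  apply Filter_prod with (fun a => 0 < a < 1) (fun b => 1 < b).
  - exists (mkposreal 1 Rlt_0_1). intros y Hy Hy0. split; auto.
    apply ballR in Hy. change (Rabs (y - 0) < 1) in Hy. rewrite Rminus_0_r in Hy.
    apply Rabs_def2 in Hy. lra.
  - exists 1. auto.
  - intros a b Ha Hb. simpl. lra.
Qed.

Lemma K_diff_bound q w h : 0 < q -> Rabs h <= 1 ->
  Rabs (K q (w+h) - K q w + h * K (q+1) w) <= h ^ 2 * K (q+2) (w-1).
Proof.
  intros Hq Hh.
  destruct (K_is q (w+h) Hq) as [I1 _].
  destruct (K_is q w Hq) as [I2 _].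
  destruct (K_is (q+1) w ltac:(lra)) as [I3 _].
  destruct (K_is (q+2) (w-1) ltac:(lra)) as [I4 _].
  pose proof (is_RInt_gen_plus _ _ _ _ (is_RInt_gen_minus _ _ _ _ I1 I2) (is_RInt_gen_scal _ h _ I3)) as I5.
  pose proof (is_RInt_gen_scal _ (h^2) _ I4) as I6.
  assert (H : norm (plus (minus (K q (w + h)) (K q w)) (scal h (K (q + 1) w))) <= scal (h^2) (K (q+2) (w-1))).
  { eapply (@RInt_gen_norm R_CompleteNormedModule (at_right 0) (Rbar_locally p_infty) _ _); [ | | exact I5 | exact I6].
    - eapply filter_imp; [| exact filt_pos]. intros ab [_ H]; exact H.
    - eapply filter_imp; [| exact filt_pos]. intros [a b] [Ha Hab] x Hx; simpl in *.
      apply (fK_diff_pt q w h x); auto; lra. }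
  exact H.
Qed.

Lemma K_derive q w : 0 < q -> is_derive (fun w => K q w) w (- K (q+1) w).
Proof.
  intros Hq. apply is_derive_Reals. intros eps Heps.
  set (C := K (q+2) (w-1)).
  assert (HC : 0 < C) by (apply K_is; lra).
  assert (Hd : 0 < Rmin 1 (eps / (C + 1))) by (apply Rmin_case; [lra| apply Rdiv_lt_0_compat; lra]).
  exists (mkposreal _ Hd). intros h Hh0 Hh. simpl in Hh.
  assert (Hh1 : Rabs h <= 1) by (left; eapply Rlt_le_trans; [apply Hh| apply Rmin_l]).
  assert (Hh2 : Rabs h < eps / (C + 1)) by (eapply Rlt_le_trans; [apply Hh| apply Rmin_r]).
  pose proof (K_diff_bound q w h Hq Hh1) as B.
  replace ((K q (w + h) - K q w) / h - - K (q + 1) w) with ((K q (w + h) - K q w + h * K (q + 1) w) / h) by (field; auto).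
  unfold Rdiv. rewrite Rabs_mult, Rabs_inv.
  assert (0 < Rabs h) by (apply Rabs_pos_lt; auto).
  apply (Rmult_lt_reg_r (Rabs h)); auto.
  rewrite Rmult_assoc, Rinv_l, Rmult_1_r by lra.
  replace (h ^ 2) with (Rabs h * Rabs h) in B by (rewrite <- Rabs_mult; simpl; rewrite Rmult_1_r; apply Rabs_right; nra).
  assert (Rabs h * C < eps).
  { apply (Rmult_lt_reg_r (/ (C+1))). apply Rinv_0_lt_compat; lra.
    assert (Rabs h * C * / (C + 1) <= Rabs h) .
    { unfold Rdiv in Hh2. apply (Rmult_le_reg_r (C+1)); [lra|].
      rewrite Rmult_assoc, Rinv_l, Rmult_1_r by lra. pose proof (Rabs_pos h); nra. }
    unfold Rdiv in Hh2. lra. }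
  fold C in B. nra.
Qed.

Definition gI (q w : R) := fun t => minus (minus (scal q (fK q w t)) (fK (q+2) w t)) (scal w (fK (q+1) w t)).

Lemma fK_cont q w t : 0 < t -> continuous (fK q w) t.
Proof. intros; apply (W_cont (q-1) w t); auto. Qed.

Lemma gI_cont q w t : 0 < t -> continuous (gI q w) t.
Proof.
  intros Ht. unfold gI.
  apply (@continuous_minus R_UniformSpace R_AbsRing R_NormedModule).
  apply (@continuous_minus R_UniformSpace R_AbsRing R_NormedModule).
  apply (@continuous_scal R_UniformSpace R_AbsRing R_NormedModule). apply continuous_const. apply fK_cont; auto.
  apply fK_cont; auto.
  apply (@continuous_scal R_UniformSpace R_AbsRing R_NormedModule). apply continuous_const. apply fK_cont; auto.
Qed.

Lemma W_derive_gI q w t : 0 < t -> is_derive (W q w) t (gI q w t).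
Proof.
  intros Ht. eapply is_derive_ext; [intros; reflexivity|].
  replace (gI q w t) with (q * Rpower t (q - 1) * exp (- t ^ 2 / 2 - w * t)
                       + Rpower t q * ((- t - w) * exp (- t ^ 2 / 2 - w * t))).
  apply W_derive; auto.
  assert (Hq : Rpower t q = t * Rpower t (q - 1)).
  { rewrite <- Rpower_S by auto. f_equal; ring. }
  unfold gI. rewrite fK_SS by auto. unfold fK. replace (q + 1 - 1) with q by ring.
  unfold minus, plus, opp, scal; simpl. unfold mult; simpl.
  rewrite Hq. simpl. ring.
Qed.

Lemma W_lim0 q w : 0 < q -> filterlim (W q w) (at_right 0) (locally 0).
Proof.
  intros Hq. apply filterlim_locally. intros [eps Heps]. simpl.
  set (E := exp (Rabs w)).
  assert (HE : 0 < E) by apply exp_pos.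
  set (r := Rpower (eps / E) (/ q)).
  assert (Hr : 0 < r) by apply Rpower_pos.
  assert (Hrq : Rpower r q = eps / E).
  { unfold r. rewrite Rpower_mult. replace (/ q * q) with 1 by (field; lra).
    apply Rpower_1. apply Rdiv_lt_0_compat; auto. }
  assert (Hd : 0 < Rmin 1 r) by (apply Rmin_case; lra).
  exists (mkposreal _ Hd). intros y Hy Hy0. simpl in Hy.
  apply ballR in Hy. change (Rabs (y - 0) < Rmin 1 r) in Hy. rewrite Rminus_0_r in Hy.
  apply Rabs_def2 in Hy.
  assert (y < 1) by (eapply Rlt_le_trans; [apply Hy| apply Rmin_l]).
  assert (y < r) by (eapply Rlt_le_trans; [apply Hy| apply Rmin_r]).
  apply ballR. change (Rabs (W q w y - 0) < eps). rewrite Rminus_0_r.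
  pose proof (W_pos q w y Hy0).
  rewrite Rabs_right by lra.
  eapply Rle_lt_trans. apply (W_bound_small q w y); lra.
  fold E. assert (Rpower y q < Rpower r q) by (apply Rlt_Rpower_l; lra).
  rewrite Hrq in H2. apply (Rmult_lt_compat_l E) in H2; auto.
  replace (E * (eps / E)) with eps in H2 by (field; lra). exact H2.
Qed.

Lemma W_liminf q w : filterlim (W q w) (Rbar_locally p_infty) (locally 0).
Proof.
  apply filterlim_locally. intros [eps Heps]. simpl.
  set (A := Rabs q + Rabs w + /2).
  set (C := exp (A ^ 2 / 2)).
  assert (HC : 0 < C) by apply exp_pos.
  exists (Rmax 1 (2 * (ln C - ln eps))). intros x Hx.
  assert (H1 : 1 < x) by (eapply Rle_lt_trans; [apply Rmax_l| apply Hx]).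
  assert (H2 : 2 * (ln C - ln eps) < x) by (eapply Rle_lt_trans; [apply Rmax_r| apply Hx]).
  apply ballR. change (Rabs (W q w x - 0) < eps). rewrite Rminus_0_r.
  pose proof (W_pos q w x ltac:(lra)).
  rewrite Rabs_right by lra.
  eapply Rle_lt_trans. apply (W_bound_large q w x); lra.
  fold A C.
  assert (exp (- x / 2) < exp (ln eps - ln C)) by (apply exp_increasing; lra).
  unfold Rminus in H0. rewrite exp_plus, exp_Ropp, !exp_ln in H0 by auto.
  apply (Rmult_lt_compat_l C) in H0; auto.
  replace (C * (eps * / C)) with eps in H0 by (field; lra). exact H0.
Qed.

Lemma K_ibp q w : 0 < q -> K (q+2) w = q * K q w - w * K (q+1) w.
Proof.
  intros Hq.
  assert (HD : is_RInt_gen (Derive (W q w)) (at_right 0) (Rbar_locally p_infty) (0 - 0)).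
  { apply (@is_RInt_gen_Derive (at_right 0) (Rbar_locally p_infty) _ _ (W q w) 0 0).
    - eapply filter_imp; [| exact filt_pos]. intros [a b] [Ha Hab] x Hx; simpl in *.
      rewrite Rmin_left in Hx by lra. eexists. apply W_derive_gI; lra.
    - eapply filter_imp; [| exact filt_pos]. intros [a b] [Ha Hab] x Hx; simpl in *.
      rewrite Rmin_left in Hx by lra.
      apply (continuous_ext_loc _ (gI q w)).
      + apply (locally_interval _ x 0 p_infty); simpl; auto; try lra.
        intros y Hy _. symmetry. apply is_derive_unique. apply W_derive_gI; auto.
      + apply gI_cont; lra.
    - apply W_lim0; auto.
    - apply W_liminf. }
  assert (HG : is_RInt_gen (gI q w) (at_right 0) (Rbar_locally p_infty) (0 - 0)).
  { eapply is_RInt_gen_ext; [| exact HD].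
    eapply filter_imp; [| exact filt_pos]. intros [a b] [Ha Hab] x Hx; simpl in *.
    rewrite Rmin_left in Hx by lra. apply is_derive_unique. apply W_derive_gI; lra. }
  destruct (K_is q w Hq) as [I1 _].
  destruct (K_is (q+1) w ltac:(lra)) as [I2 _].
  destruct (K_is (q+2) w ltac:(lra)) as [I3 _].
  pose proof (is_RInt_gen_minus _ _ _ _ (is_RInt_gen_minus _ _ _ _ (is_RInt_gen_scal _ q _ I1) I3) (is_RInt_gen_scal _ w _ I2)) as I4.
  assert (HG2 : is_RInt_gen (gI q w) (at_right 0) (Rbar_locally p_infty)
     (minus (minus (scal q (K q w)) (K (q+2) w)) (scal w (K (q+1) w)))) by exact I4.
  pose proof (is_RInt_gen_unique _ _ HG) as U1.
  pose proof (is_RInt_gen_unique _ _ HG2) as U2.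
  rewrite U1 in U2. unfold minus, plus, opp, scal in U2; simpl in U2. unfold mult in U2; simpl in U2.
  lra.
Qed.

Lemma K_quad q w c : 0 < q -> 0 <= K (q+2) w - 2 * c * K (q+1) w + c ^ 2 * K q w.
Proof.
  intros Hq.
  destruct (K_is q w Hq) as [I1 _].
  destruct (K_is (q+1) w ltac:(lra)) as [I2 _].
  destruct (K_is (q+2) w ltac:(lra)) as [I3 _].
  pose proof (is_RInt_gen_plus _ _ _ _ (is_RInt_gen_minus _ _ _ _ I3 (is_RInt_gen_scal _ (2*c) _ I2)) (is_RInt_gen_scal _ (c^2) _ I1)) as I4.
  pose proof (is_RInt_gen_scal _ 0 _ I1) as I0.
  assert (H : norm (scal 0 (K q w)) <= plus (minus (K (q+2) w) (scal (2*c) (K (q+1) w))) (scal (c^2) (K q w))).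
  { eapply (@RInt_gen_norm R_CompleteNormedModule (at_right 0) (Rbar_locally p_infty) _ _); [ | | exact I0 | exact I4].
    - eapply filter_imp; [| exact filt_pos]. intros ab [_ H]; exact H.
    - eapply filter_imp; [| exact filt_pos]. intros [a b] [Ha Hab] x Hx; simpl in *.
      assert (0 < x) by lra.
      change (Rabs (0 * fK q w x) <= fK (q+2) w x - 2*c*fK (q+1) w x + c^2 * fK q w x).
      rewrite fK_S, fK_SS by auto. rewrite Rmult_0_l, Rabs_R0.
      pose proof (W_pos (q-1) w x H).
      replace (x ^ 2 * fK q w x - 2 * c * (x * fK q w x) + c ^ 2 * fK q w x)
        with ((x - c) ^ 2 * fK q w x) by ring.
      apply Rmult_le_pos; [apply pow2_ge_0| left; exact H0]. }
  change (Rabs (0 * K q w) <= K (q+2) w - 2*c*K (q+1) w + c^2 * K q w) in H.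
  rewrite Rmult_0_l, Rabs_R0 in H. lra.
Qed.

Lemma K_CS q w : 0 < q -> K (q+1) w * K (q+1) w <= K q w * K (q+2) w.
Proof.
  intros Hq. destruct (K_is q w Hq) as [_ Hp].
  pose proof (K_quad q w (K (q+1) w / K q w) Hq) as H.
  apply (Rmult_le_compat_l (K q w)) in H; [|lra].
  replace (K q w * (K (q + 2) w - 2 * (K (q + 1) w / K q w) * K (q + 1) w + (K (q + 1) w / K q w) ^ 2 * K q w))
    with (K q w * K (q+2) w - K (q+1) w * K (q+1) w) in H by (field; lra).
  lra.
Qed.

Definition wf (b a s y : R) := - (b * y - a) / (s * b) * sqrt (2 * b).

Lemma psi_eq b rho a s y : 0 < b -> s <> 0 ->
  psi b rho y a s = K (- (- rho / b)) (wf b a s y) / Gamma_fn (- (- rho / b)).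
Proof.
  intros Hb Hs. unfold psi, Dpc. fold (K (- (- rho / b)) (- (b * y - a) / (s * b) * sqrt (2 * b))).
  fold (wf b a s y).
  assert (E : exp ((b * y - a) ^ 2 / (2 * s ^ 2 * b)) * exp (- wf b a s y ^ 2 / 4) = 1).
  { rewrite <- exp_plus. rewrite <- exp_0. f_equal.
    assert (Hs2 : sqrt (2*b) * sqrt (2*b) = 2*b) by (apply sqrt_sqrt; lra).
    unfold wf.
    replace ((- (b * y - a) / (s * b) * sqrt (2 * b)) ^ 2) with
      ((b * y - a) ^ 2 / (s * b) ^ 2 * (sqrt (2*b) * sqrt (2*b))) by (field; split; lra).
    rewrite Hs2. field. split; lra. }
  match goal with |- context [RInt_gen ?f ?F ?G] => change (RInt_gen f F G) with (K (- (- rho / b)) (wf b a s y)) end.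
  set (A := exp ((b * y - a) ^ 2 / (2 * s ^ 2 * b))) in *.
  set (B := exp (- wf b a s y ^ 2 / 4)) in *.
  replace (A * (B / Gamma_fn (- (- rho / b)) * K (- (- rho / b)) (wf b a s y)))
    with ((A * B) * (K (- (- rho / b)) (wf b a s y) / Gamma_fn (- (- rho / b)))) by (unfold Rdiv; ring).
  rewrite E. ring.
Qed.

Lemma wf_derive b a s y : 0 < b -> s <> 0 ->
  is_derive (fun y => wf b a s y) y (- (sqrt (2 * b) / s)).
Proof.
  intros Hb Hs. unfold wf. auto_derive; auto. field. split; lra.
Qed.

Lemma psi_dn b rho a s n y : 0 < b -> 0 < rho -> s <> 0 ->
  Derive_n (fun y => psi b rho y a s) n y =
  (sqrt (2 * b) / s) ^ n * K (- (- rho / b) + INR n) (wf b a s y) / Gamma_fn (- (- rho / b)).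
Proof.
  intros Hb Hr Hs.
  assert (Hnu : 0 < - (- rho / b)) by (replace (- (- rho / b)) with (rho / b) by (field; lra); apply Rdiv_lt_0_compat; lra).
  revert y. induction n as [|n IH]; intros y.
  - simpl Derive_n. rewrite psi_eq by auto. simpl INR. simpl pow. rewrite Rplus_0_r. field. intro HG. pose proof (Gamma_pos _ Hnu). unfold Gamma_fn in HG. lra.
  - simpl Derive_n.
    rewrite (Derive_ext _ (fun y => (sqrt (2 * b) / s) ^ n / Gamma_fn (- (- rho / b)) * K (- (- rho / b) + INR n) (wf b a s y))).
    2:{ intros t. rewrite IH. unfold Rdiv; ring. }
    apply is_derive_unique.
    set (c := sqrt (2 * b) / s).
    set (G := Gamma_fn (- (- rho / b))).
    set (nu := - (- rho / b)) in *.
    assert (Hq : 0 < nu + INR n) by (pose proof (pos_INR n); lra).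
    eapply is_derive_ext; [intros; reflexivity|].
    replace (c ^ S n * K (nu + INR (S n)) (wf b a s y) / G)
      with (c ^ n / G * (scal (- c) (- K (nu + INR n + 1) (wf b a s y)))).
    + apply is_derive_scal.
      apply (is_derive_comp (fun w => K (nu + INR n) w) (fun y => wf b a s y)).
      * apply K_derive; auto.
      * apply wf_derive; auto.
    + rewrite S_INR, <- Rplus_assoc. unfold scal; simpl. unfold mult; simpl. unfold c. field.
      split; auto. intro HG. pose proof (Gamma_pos _ Hnu). unfold G, Gamma_fn in HG. lra.
Qed.

Lemma wf_derive_s b a s x : 0 < b -> s <> 0 ->
  is_derive (fun s => wf b a s x) s ((b * x - a) * sqrt (2 * b) / (b * s ^ 2)).
Proof.
  intros Hb Hs. unfold wf. auto_derive.
  - apply Rmult_integral_contrapositive_currified; lra.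
  - field. split; lra.
Qed.

Lemma arith_pos (p l M0 M1 M2 M3 : R) : 0 < p -> 0 < M0 -> 0 < M1 ->
  M2 = p*M0 + l*M1 -> M3 = (p+1)*M1 + l*M2 -> M2*M2 <= M1*M3 -> M1*M1 <= M0*M2 ->
  0 < M0*M1 - l*(M1*M1 - M0*M2).
Proof.
intros Hp H0 H1 E2 E3 C1 C0.
destruct (Rle_or_lt 0 l) as [Hl|Hl].
- assert (0 <= l*(M0*M2 - M1*M1)) by (apply Rmult_le_pos; lra). nra.
- set (L := -l). assert (HL : 0 < L) by (unfold L; lra).
  set (r := M1/M0).
  assert (Hr : M1 = r*M0) by (unfold r; field; lra).
  assert (Hrp : 0 < r) by (unfold r; apply Rdiv_lt_0_compat; lra).
  subst M2 M3. rewrite Hr in C1 |- *.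
  replace l with (-L) in * by (unfold L; ring).
  assert (C : (p+1)*r*r + L*p*r - p*p >= 0).
  { assert (H : M0*M0*((p+1)*r*r + L*p*r - p*p) >= 0) by nra.
    assert (0 < M0*M0) by nra.
    destruct (Rle_or_lt 0 ((p+1)*r*r + L*p*r - p*p)); [lra|]. nra. }
  set (s := L*p/(p+1+L*L)).
  assert (Hs : s*(p+1+L*L) = L*p) by (unfold s; field; nra).
  destruct (Rle_or_lt r s) as [Hrs|Hrs].
  + exfalso.
    assert (Cs : (p+1)*s*s + L*p*s - p*p < 0).
    { assert (D: 0 < p+1+L*L) by nra.
      assert (E: ((p+1)*s*s + L*p*s - p*p)*((p+1+L*L)*(p+1+L*L)) = - p*p*(p+1)*(p+1)).
      { unfold s. field. lra. }
      destruct (Rle_or_lt 0 ((p+1)*s*s + L*p*s - p*p)); [|lra].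
      assert (0 <= ((p+1)*s*s + L*p*s - p*p)*((p+1+L*L)*(p+1+L*L))) by (apply Rmult_le_pos; nra).
      nra. }
    assert (0 <= (s-r)*((p+1)*(s+r)+L*p)) by (apply Rmult_le_pos; nra).
    assert ((p+1)*r*r + L*p*r <= (p+1)*s*s + L*p*s) by nra. lra.
  + assert (Q : 0 < L*r*r + (1+L*L)*r - L*p).
    { assert (E : (p+1)*(L*r*r + (1+L*L)*r - L*p) = L*((p+1)*r*r + L*p*r - p*p) + (r*(p+1+L*L) - L*p)) by ring.
      assert (r*(p+1+L*L) - L*p > 0) by nra.
      assert (0 <= L*((p+1)*r*r + L*p*r - p*p)) by (apply Rmult_le_pos; lra).
      nra. }
    assert (E : M0*(r*M0) - -L*(r*M0*(r*M0) - M0*(p*M0 + -L*(r*M0))) = M0*M0*(L*r*r + (1+L*L)*r - L*p)) by ring.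
    rewrite E. apply Rmult_lt_0_compat; nra.
Qed.

Theorem lemma5p4 (b rho a sigma : R) (k : nat) (x : R) :
  0 < b -> 0 < rho -> 0 < sigma ->
  is_derive (fun s => psi_k b rho k x a s / psi_k b rho (S k) x a s) sigma
    (((a - b * x) * (psi_k b rho (S k) x a sigma ^ 2
                     - psi_k b rho k x a sigma * psi_k b rho (S (S k)) x a sigma)
      + b * psi_k b rho (S k) x a sigma * psi_k b rho k x a sigma)
     / (b * sigma * psi_k b rho (S k) x a sigma ^ 2))
  /\
  0 < ((a - b * x) * (psi_k b rho (S k) x a sigma ^ 2
                      - psi_k b rho k x a sigma * psi_k b rho (S (S k)) x a sigma)
       + b * psi_k b rho (S k) x a sigma * psi_k b rho k x a sigma)
      / (b * sigma * psi_k b rho (S k) x a sigma ^ 2).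
Proof.
  intros Hb Hr Hs.
  assert (Hnu : 0 < - (- rho / b)) by (replace (- (- rho / b)) with (rho / b) by (field; lra); apply Rdiv_lt_0_compat; lra).
  set (nu := - (- rho / b)) in *.
  set (G := Gamma_fn nu).
  assert (HG : 0 < G) by (unfold G, Gamma_fn; apply (Gamma_pos nu Hnu)).
  assert (Hr2 : 0 < sqrt (2 * b)) by (apply sqrt_lt_R0; lra).
  set (p := nu + INR k).
  assert (Hp : 0 < p) by (unfold p; pose proof (pos_INR k); lra).
  assert (F0 : forall s, 0 < s -> psi_k b rho k x a s = (sqrt (2 * b) / s) ^ k * K p (wf b a s x) / G).
  { intros s0 Hs0. unfold psi_k. rewrite psi_dn by lra. reflexivity. }
  assert (F1 : forall s, 0 < s -> psi_k b rho (S k) x a s = (sqrt (2 * b) / s) * (sqrt (2 * b) / s) ^ k * K (p+1) (wf b a s x) / G).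
  { intros s0 Hs0. unfold psi_k. rewrite psi_dn by lra. fold nu G. rewrite S_INR.
    replace (nu + (INR k + 1)) with (p + 1) by (unfold p; ring). reflexivity. }
  assert (F2 : forall s, 0 < s -> psi_k b rho (S (S k)) x a s = (sqrt (2 * b) / s) * ((sqrt (2 * b) / s) * (sqrt (2 * b) / s) ^ k) * K (p+2) (wf b a s x) / G).
  { intros s0 Hs0. unfold psi_k. rewrite psi_dn by lra. fold nu G. rewrite !S_INR.
    replace (nu + (INR k + 1 + 1)) with (p + 2) by (unfold p; ring). reflexivity. }
  set (g := fun s => (s * K p (wf b a s x)) / (sqrt (2 * b) * K (p+1) (wf b a s x))).
  set (w0 := wf b a sigma x).
  set (K0 := K p w0). set (K1 := K (p+1) w0). set (K2 := K (p+2) w0). set (K3 := K (p+3) w0).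
  assert (HK0 : 0 < K0) by exact (proj2 (K_is p w0 Hp)).
  assert (HK1 : 0 < K1) by exact (proj2 (K_is (p+1) w0 ltac:(lra))).
  set (dw := (b * x - a) * sqrt (2 * b) / (b * sigma ^ 2)).
  assert (D1 : is_derive (fun s => s * K p (wf b a s x)) sigma (1 * K0 + sigma * (dw * - K1))).
  { pose proof (is_derive_mult (fun s => s) (fun s => K p (wf b a s x)) sigma 1 _
      (is_derive_id (K := R_AbsRing) sigma)
      (is_derive_comp (fun w => K p w) (fun s => wf b a s x) sigma _ _
          (K_derive p w0 Hp) (wf_derive_s b a sigma x Hb ltac:(lra)))
      (fun n m => Rmult_comm n m)) as H.
    exact H. }
  assert (D2 : is_derive (fun s => sqrt (2 * b) * K (p+1) (wf b a s x)) sigma (sqrt (2 * b) * (dw * - K2))).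
  { pose proof (is_derive_scal _ sigma (sqrt (2 * b)) _
      (is_derive_comp (fun w => K (p+1) w) (fun s => wf b a s x) sigma _ _
          (K_derive (p+1) w0 ltac:(lra)) (wf_derive_s b a sigma x Hb ltac:(lra)))) as H.
    replace (p + 1 + 1) with (p + 2) in H by ring.
    exact H. }
  assert (Hnz : sqrt (2 * b) * K1 <> 0) by (apply Rmult_integral_contrapositive_currified; lra).
  assert (Dg := is_derive_div _ _ sigma _ _ D1 D2 Hnz).
  fold g in Dg.
  assert (HK2 : 0 < K2) by exact (proj2 (K_is (p+2) w0 ltac:(lra))).
  assert (Hck : (sqrt (2 * b) / sigma) ^ k <> 0) by (apply pow_nonzero; apply Rgt_not_eq, Rdiv_lt_0_compat; lra).
  rewrite (F0 sigma Hs), (F1 sigma Hs), (F2 sigma Hs).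
  change (K p (wf b a sigma x)) with K0.
  change (K (p+1) (wf b a sigma x)) with K1.
  change (K (p+2) (wf b a sigma x)) with K2.
  assert (HT : forall T, T = ((1 * K0 + sigma * (dw * - K1)) * (sqrt (2 * b) * K1) -
            sigma * K0 * (sqrt (2 * b) * (dw * - K2))) / (sqrt (2 * b) * K1) ^ 2 ->
          is_derive (fun s => psi_k b rho k x a s / psi_k b rho (S k) x a s) sigma T).
  { intros T ->. apply (is_derive_ext_loc g); [| exact Dg].
    apply (locally_interval _ sigma 0 p_infty); simpl; auto; try lra.
    intros s0 Hs0 _. unfold g. rewrite (F0 s0 Hs0), (F1 s0 Hs0).
    assert (0 < K (p+1) (wf b a s0 x)) by exact (proj2 (K_is (p+1) _ ltac:(lra))).
    assert ((sqrt (2 * b) / s0) ^ k <> 0) by (apply pow_nonzero; apply Rgt_not_eq, Rdiv_lt_0_compat; lra).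
    field. repeat split; lra. }
  assert (E : ((a - b * x) *
    ((sqrt (2 * b) / sigma * (sqrt (2 * b) / sigma) ^ k * K1 / G) ^ 2 -
     (sqrt (2 * b) / sigma) ^ k * K0 / G *
     (sqrt (2 * b) / sigma * (sqrt (2 * b) / sigma * (sqrt (2 * b) / sigma) ^ k) * K2 / G)) +
    b * (sqrt (2 * b) / sigma * (sqrt (2 * b) / sigma) ^ k * K1 / G) *
    ((sqrt (2 * b) / sigma) ^ k * K0 / G)) /
   (b * sigma * (sqrt (2 * b) / sigma * (sqrt (2 * b) / sigma) ^ k * K1 / G) ^ 2)
   = ((1 * K0 + sigma * (dw * - K1)) * (sqrt (2 * b) * K1) -
            sigma * K0 * (sqrt (2 * b) * (dw * - K2))) / (sqrt (2 * b) * K1) ^ 2).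
  { unfold dw. field. repeat split; lra. }
  rewrite E. split; [apply HT; reflexivity|].
  assert (E2 : ((1 * K0 + sigma * (dw * - K1)) * (sqrt (2 * b) * K1) -
            sigma * K0 * (sqrt (2 * b) * (dw * - K2))) / (sqrt (2 * b) * K1) ^ 2
     = (K0 * K1 - (- w0) * (K1 * K1 - K0 * K2)) / (sqrt (2 * b) * (K1 * K1))).
  { unfold dw, w0, wf. field. repeat split; lra. }
  rewrite E2. apply Rdiv_lt_0_compat; [| apply Rmult_lt_0_compat; nra].
  assert (I1 : K2 = p * K0 + (- w0) * K1).
  { pose proof (K_ibp p w0 Hp) as H. change (K2 = p * K0 - w0 * K1) in H. lra. }
  assert (I2 : K3 = (p + 1) * K1 + (- w0) * K2).
  { pose proof (K_ibp (p+1) w0 ltac:(lra)) as H.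
    replace (p + 1 + 2) with (p + 3) in H by ring. replace (p + 1 + 1) with (p + 2) in H by ring.
    change (K3 = (p + 1) * K1 - w0 * K2) in H. lra. }
  assert (C1 : K1 * K1 <= K0 * K2) by exact (K_CS p w0 Hp).
  assert (C2 : K2 * K2 <= K1 * K3).
  { pose proof (K_CS (p+1) w0 ltac:(lra)) as H.
    replace (p + 1 + 2) with (p + 3) in H by ring. replace (p + 1 + 1) with (p + 2) in H by ring.
    exact H. }
  apply (arith_pos p (- w0) K0 K1 K2 K3); auto.
Qed.
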